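(* For every integer $p\geq1$ and every $\alpha>0$ there exists $C=C(\alpha,p)>0$ such that the following holds. Let $\pi$ be the Ising measure on $N$ spins (no external field) with couplings $\{J_{ij}\}$, and let $\tilde\pi$ be the Ising measure with couplings $\{|J_{ij}|\}$. Suppose $\tilde\pi$ is $(1-\alpha/N)$-contracting. Let $B=(b_{i_1,\dots,i_p})$ be a real tensor of order $p$ indexed by $\{1,\dots,N\}^p$ and $h(\sigma)=\sum_{i_1,\dots,i_p}b_{i_1,\dots,i_p}\sigma_{i_1}\cdots\sigma_{i_p}$. Then $$|\mathbb E_\pi[h(\sigma)]|\leq C\,\|B\|_\infty\,N^{p/2},$$ where $\|B\|_\infty=\max_{i_1,\dots,i_p}|b_{i_1,\dots,i_p}|$.
   Context: Spin configurations are $\sigma\in\Omega_N=\{\pm1\}^N$. For real couplings $\{J_{ij}\}$, the Ising measure (no external field) is $\pi(\sigma)=\mathcal Z^{-1}\exp\big(\sum_{i,j}J_{ij}\sigma_i\sigma_j\big)$. An Ising measure is $\theta$-contracting if there is a discrete-time Markov chain on $\Omega_N$ with that stationary measure, changing at most one coordinate per step, such that $\max_{\sigma,\sigma':\|\sigma-\sigma'\|_1=1}W_1(\mathbb P_\sigma(X_1\in\cdot),\mathbb P_{\sigma'}(X_1\in\cdot))\leq\theta<1$, with $W_1$ the $L^1$-Wasserstein distance w.r.t. $\|\cdot\|_1$. *)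

(* Defs.v *)
From Stdlib Require Import Reals.
From mathcomp Require Import all_boot.
Set Implicit Arguments. Unset Strict Implicit. Unset Printing Implicit Defensive.
Local Open Scope R_scope.

Definition config (N : nat) := {ffun 'I_N -> bool}.

Definition spin (N : nat) (s : config N) (i : 'I_N) : R :=
  if s i then R1 else (- R1).

Notation "\rsum_ ( x : T ) F" := (\big[Rplus/R0]_(x : T) F)
  (at level 41, F at level 41, x, T at level 50).
Notation "\rprod_ ( x : T ) F" := (\big[Rmult/R1]_(x : T) F)
  (at level 36, F at level 36, x, T at level 50).

(* Hamming distance = ||.||_1 on configurations, normalised so that
   configurations differing in one coordinate are at distance 1. *)
Definition hamming (N : nat) (s t : config N) : nat := #|[set i | s i != t i]|.
Definition dist (N : nat) (s t : config N) : R := INR (hamming s t).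

Definition ising_H (N : nat) (J : 'I_N -> 'I_N -> R) (s : config N) : R :=
  \rsum_(i : 'I_N) \rsum_(j : 'I_N) (J i j * spin s i * spin s j).
Definition ising_Z (N : nat) (J : 'I_N -> 'I_N -> R) : R :=
  \rsum_(s : config N) exp (ising_H J s).
Definition ising (N : nat) (J : 'I_N -> 'I_N -> R) (s : config N) : R :=
  exp (ising_H J s) / ising_Z J.

Definition expect (N : nat) (mu : config N -> R) (f : config N -> R) : R :=
  \rsum_(s : config N) (mu s * f s).

Definition coupling (N : nat) (mu nu : config N -> R)
  (gamma : config N -> config N -> R) : Prop :=
  (forall x y, 0 <= gamma x y) /\
  (forall x, \rsum_(y : config N) gamma x y = mu x) /\
  (forall y, \rsum_(x : config N) gamma x y = nu y).

(* W_1(mu, nu) <= theta, where W_1 is the infimum over couplings of the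
   expected distance: for every eps > 0 some coupling has cost <= theta+eps. *)
Definition W1_le (N : nat) (mu nu : config N -> R) (theta : R) : Prop :=
  forall eps : R, (0 < eps) ->
  exists gamma, coupling mu nu gamma /\
    (\rsum_(x : config N) \rsum_(y : config N) (gamma x y * dist x y)
       <= theta + eps).

Definition markov_kernel (N : nat) (P : config N -> config N -> R) : Prop :=
  (forall x y, 0 <= P x y) /\
  (forall x, \rsum_(y : config N) P x y = R1).

Definition stationary (N : nat) (pi : config N -> R)
  (P : config N -> config N -> R) : Prop :=
  forall y, \rsum_(x : config N) (pi x * P x y) = pi y.

Definition single_site (N : nat) (P : config N -> config N -> R) : Prop :=
  forall x y, P x y <> R0 -> (hamming x y <= 1)%N.

Definition contracting (N : nat) (pi : config N -> R) (theta : R) : Prop :=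
  (theta < 1) /\
  exists P : config N -> config N -> R,
    markov_kernel P /\ stationary pi P /\ single_site P /\
    forall s s' : config N, hamming s s' = 1%N -> W1_le (P s) (P s') theta.

Definition tensor_poly (N p : nat) (B : {ffun 'I_p -> 'I_N} -> R)
  (s : config N) : R :=
  \rsum_(idx : {ffun 'I_p -> 'I_N}) (B idx * \rprod_(k : 'I_p) spin s (idx k)).

Definition tensor_supnorm (N p : nat) (B : {ffun 'I_p -> 'I_N} -> R) : R :=
  \big[Rmax/R0]_(idx : {ffun 'I_p -> 'I_N}) Rabs (B idx).

(* Main.v *)
From HB Require Import structures.
Require Import Defs.
From Stdlib Require Import Reals Lra Lia.
From mathcomp Require Import all_boot.
Set Implicit Arguments. Unset Strict Implicit.
Local Open Scope R_scope.

Lemma Rplus_0_l' : left_id R0 Rplus. Proof. move=> x; lra. Qed.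
Lemma Rmult_1_l' : left_id R1 Rmult. Proof. move=> x; lra. Qed.
Lemma Rplus_A : associative Rplus. Proof. move=> x y z; lra. Qed.
Lemma Rplus_C : commutative Rplus. Proof. move=> x y; lra. Qed.
Lemma Rmult_A : associative Rmult. Proof. move=> x y z; ring. Qed.
Lemma Rmult_C : commutative Rmult. Proof. move=> x y; ring. Qed.
HB.instance Definition _ := Monoid.isComLaw.Build R R0 Rplus Rplus_A Rplus_C Rplus_0_l'.
HB.instance Definition _ := Monoid.isComLaw.Build R R1 Rmult Rmult_A Rmult_C Rmult_1_l'.
Lemma Rm0l : left_zero R0 Rmult. Proof. move=> x; ring. Qed.
Lemma Rm0r : right_zero R0 Rmult. Proof. move=> x; ring. Qed.
HB.instance Definition _ := Monoid.isMulLaw.Build R R0 Rmult Rm0l Rm0r.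
Lemma RDl : left_distributive Rmult Rplus. Proof. move=> x y z; ring. Qed.
Lemma RDr : right_distributive Rmult Rplus. Proof. move=> x y z; ring. Qed.
HB.instance Definition _ := Monoid.isAddLaw.Build R Rmult Rplus RDl RDr.

Lemma sum_ge0 (I : finType) (F : I -> R) :
  (forall i, 0 <= F i) -> 0 <= \rsum_(i : I) F i.
Proof. move=> H; apply: (big_ind (fun x => 0 <= x)) => //; [lra|move=> *; lra]. Qed.

Lemma prod_ge0 (I : finType) (F : I -> R) :
  (forall i, 0 <= F i) -> 0 <= \rprod_(i : I) F i.
Proof. move=> H; apply: (big_ind (fun x => 0 <= x)) => //; [lra|move=> x y *; nra]. Qed.

Lemma sum_le (I : finType) (F G : I -> R) :
  (forall i, F i <= G i) -> \rsum_(i : I) F i <= \rsum_(i : I) G i.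
Proof.
move=> H; apply: (big_ind2 (fun x y => x <= y)) => //; [lra|move=> *; lra].
Qed.

Lemma sum_abs (I : finType) (F : I -> R) :
  Rabs (\rsum_(i : I) F i) <= \rsum_(i : I) Rabs (F i).
Proof.
apply: (big_ind2 (fun x y => Rabs x <= y)).
- rewrite Rabs_R0; lra.
- move=> a b c d H1 H2; have := Rabs_triang a c; lra.
- move=> i _; lra.
Qed.

Lemma sum_split (I : finType) (F G : I -> R) :
  \rsum_(i : I) (F i + G i) = \rsum_(i : I) F i + \rsum_(i : I) G i.
Proof. by rewrite big_split. Qed.

Lemma sum_scale (I : finType) (F : I -> R) a :
  \rsum_(i : I) (a * F i) = a * \rsum_(i : I) F i.
Proof. by rewrite big_distrr. Qed.

Lemma sum_opp (I : finType) (F : I -> R) :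
  \rsum_(i : I) (- F i) = - \rsum_(i : I) F i.
Proof.
rewrite (big_morph Ropp (id2 := R0) (op2 := Rplus) (id1 := R0) (op1 := Rplus)) //.
- by move=> x y; rewrite Ropp_plus_distr.
- by rewrite Ropp_0.
Qed.

Lemma exp_sum (I : finType) (F : I -> R) :
  exp (\rsum_(i : I) F i) = \rprod_(i : I) exp (F i).
Proof.
rewrite (big_morph exp (id2 := R0) (op2 := Rplus) (id1 := R1) (op1 := Rmult)) //.
- by move=> x y; rewrite exp_plus.
- by rewrite exp_0.
Qed.

Lemma prod_split (I : finType) (F G : I -> R) :
  \rprod_(i : I) (F i * G i) = \rprod_(i : I) F i * \rprod_(i : I) G i.
Proof. by rewrite big_split. Qed.

Lemma sum_const_R (I : finType) (c : R) :
  \rsum_(i : I) c = INR #|I| * c.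
Proof.
rewrite big_const; elim: #|I| => [|n IH]; first by rewrite /=; lra.
rewrite iterS IH S_INR; lra.
Qed.

Lemma spin_cases (N : nat) (s : config N) (i : 'I_N) : spin s i = 1 \/ spin s i = -1.
Proof. rewrite /spin; case: (s i); [left|right]; reflexivity. Qed.

Lemma Rabs_spin (N : nat) (s : config N) (i : 'I_N) : Rabs (spin s i) = 1.
Proof. case: (spin_cases s i) => ->; rewrite ?Rabs_Ropp Rabs_R1 //. Qed.

Lemma prod_abs_le1 (I : finType) (F : I -> R) :
  (forall i, Rabs (F i) <= 1) -> Rabs (\rprod_(i : I) F i) <= 1.
Proof.
move=> H; apply: (big_ind (fun x => Rabs x <= 1)) => //.
- rewrite Rabs_R1; lra.
- move=> x y Hx Hy; rewrite Rabs_mult.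
  have := Rabs_pos x; have := Rabs_pos y; nra.
Qed.

Lemma exp_le x y : x <= y -> exp x <= exp y.
Proof. case/Rle_lt_or_eq_dec => [/exp_increasing|->]; lra. Qed.

Definition mono (N : nat) (m : 'I_N -> nat) (s : config N) : R :=
  \rprod_(i : 'I_N) (spin s i ^ m i).

Lemma sum_mono_ge0 (N : nat) (m : 'I_N -> nat) : 0 <= \rsum_(s : config N) mono m s.
Proof.
rewrite /mono.
have -> : \rsum_(s : config N) \rprod_(i : 'I_N) spin s i ^ m i =
   \rprod_(i : 'I_N) \rsum_(b : bool) ((if b then R1 else - R1) ^ m i).
  by rewrite bigA_distr_bigA.
apply: prod_ge0 => i.
rewrite /index_enum !unlock /= Rplus_0_r pow1.
have h1 : Rabs ((- R1) ^ m i) = 1 by rewrite -RPow_abs Rabs_Ropp Rabs_R1 pow1.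
have := Rabs_Ropp ((- R1) ^ m i); have := Rle_abs (- (- R1) ^ m i); lra.
Qed.

Definition PP (N : nat) (f : config N -> R) : Prop :=
  exists (I : finType) (c : I -> R) (m : I -> 'I_N -> nat),
    (forall x, 0 <= c x) /\ forall s, f s = \rsum_(x : I) (c x * mono (m x) s).

Lemma PP_ext (N : nat) (f g : config N -> R) : PP f -> (forall s, f s = g s) -> PP g.
Proof.
move=> [I [c [m [Hc Hf]]]] Hfg; exists I, c, m; split => // s; by rewrite -Hfg.
Qed.

Lemma PP_sum_ge0 (N : nat) (f : config N -> R) : PP f -> 0 <= \rsum_(s : config N) f s.
Proof.
move=> [I [c [m [Hc Hf]]]].
rewrite (eq_bigr (fun s => \rsum_(x : I) (c x * mono (m x) s))); last by move=> s _; rewrite Hf.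
rewrite exchange_big /=; apply: sum_ge0 => x.
rewrite sum_scale; apply: Rmult_le_pos; [exact: Hc| exact: sum_mono_ge0].
Qed.

Lemma PP_mono (N : nat) (m : 'I_N -> nat) : PP (mono m).
Proof.
exists unit, (fun _ => R1), (fun _ => m); split => [_ /=|s]; first lra.
rewrite /index_enum !unlock /=; ring.
Qed.

Lemma mono_add (N : nat) (m1 m2 : 'I_N -> nat) s :
  mono (fun i => (m1 i + m2 i)%nat) s = mono m1 s * mono m2 s.
Proof. rewrite /mono -prod_split; apply: eq_bigr => i _; by rewrite pow_add. Qed.

Lemma mono0 (N : nat) (s : config N) : mono (fun _ => 0%nat) s = 1.
Proof. rewrite /mono big1 //. Qed.

Lemma PP_mul (N : nat) (f g : config N -> R) : PP f -> PP g -> PP (fun s => f s * g s).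
Proof.
move=> [I [c [m [Hc Hf]]]] [I' [c' [m' [Hc' Hg]]]].
exists (I * I')%type, (fun x => c x.1 * c' x.2),
  (fun x => fun i => (m x.1 i + m' x.2 i)%nat); split.
  by move=> x; have := Hc x.1; have := Hc' x.2; nra.
move=> s; rewrite Hf Hg big_distrl /=.
under eq_bigr do rewrite big_distrr.
rewrite pair_big /=; apply: eq_bigr => x _.
rewrite mono_add; ring.
Qed.

Lemma PP_add (N : nat) (f g : config N -> R) : PP f -> PP g -> PP (fun s => f s + g s).
Proof.
move=> [I [c [m [Hc Hf]]]] [I' [c' [m' [Hc' Hg]]]].
exists (I + I')%type, (fun x => match x with inl a => c a | inr b => c' b end),
  (fun x => match x with inl a => m a | inr b => m' b end); split.
  by case.
by move=> s; rewrite big_sumType Hf Hg.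
Qed.

Lemma PP_scale (N : nat) (a : R) (f : config N -> R) : 0 <= a -> PP f -> PP (fun s => a * f s).
Proof.
move=> Ha [I [c [m [Hc Hf]]]].
exists I, (fun x => a * c x), m; split.
  by move=> x; have := Hc x; nra.
move=> s; rewrite Hf -sum_scale; apply: eq_bigr => x _; ring.
Qed.

Lemma PP_one (N : nat) : PP (fun _ : config N => 1).
Proof. apply: PP_ext (PP_mono (fun _ => 0%nat)) _ => s; by rewrite mono0. Qed.

Lemma PP_prod (N : nat) (J : finType) (F : J -> config N -> R) :
  (forall j, PP (F j)) -> PP (fun s => \rprod_(j : J) F j s).
Proof.
move=> H.
suff: forall r : seq J, PP (fun s => \big[Rmult/R1]_(j <- r) F j s) by apply.
elim=> [|j r IH].
  apply: PP_ext (PP_one N) _ => s; by rewrite big_nil.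
apply: PP_ext (PP_mul (H j) IH) _ => s; by rewrite big_cons.
Qed.

Lemma PP_spin (N : nat) (i : 'I_N) : PP (fun s => spin s i).
Proof.
apply: PP_ext (PP_mono (fun k => if k == i then 1%nat else 0%nat)) _ => s.
rewrite /mono (bigD1 i) //= eqxx big1 ?Rmult_1_r ?pow_1 //.
by move=> k /negbTE ->.
Qed.

Lemma PP_exp_pair (N : nat) (K : R) (i j : 'I_N) : 0 <= K ->
  PP (fun s => exp (K * spin s i * spin s j)).
Proof.
move=> HK.
have Hle : exp (- K) <= exp K by apply: exp_le; lra.
have Ha : 0 <= (exp K + exp (- K)) / 2 by have := exp_pos K; have := exp_pos (-K); lra.
have Hb : 0 <= (exp K - exp (- K)) / 2 by lra.
have H := PP_add (PP_scale Ha (PP_one N)) (PP_scale Hb (PP_mul (PP_spin i) (PP_spin j))).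
apply: PP_ext H _ => s /=.
case: (spin_cases s i) => ->; case: (spin_cases s j) => ->.
- replace (K * 1 * 1) with K by ring; field.
- replace (K * 1 * -1) with (- K) by ring; field.
- replace (K * -1 * 1) with (- K) by ring; field.
- replace (K * -1 * -1) with K by ring; field.
Qed.

Definition hamH (N : nat) (J : 'I_N -> 'I_N -> R) (s : config N) := ising_H J s.

Lemma griffiths (N p : nat) (K : 'I_N -> 'I_N -> R) (idx : {ffun 'I_p -> 'I_N}) :
  (forall i j, 0 <= K i j) ->
  0 <= \rsum_(s : config N) ((\rprod_(k : 'I_p) spin s (idx k)) * exp (ising_H K s)).
Proof.
move=> HK; apply: PP_sum_ge0; apply: PP_mul.
  by apply: PP_prod => k; apply: PP_spin.
apply: (PP_ext (f := fun s => \rprod_(i : 'I_N) \rprod_(j : 'I_N) exp (K i j * spin s i * spin s j))).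
  apply: PP_prod => i; apply: PP_prod => j; exact: PP_exp_pair.
move=> s; rewrite /ising_H exp_sum; apply: eq_bigr => i _; by rewrite exp_sum.
Qed.

Definition mulc (N : nat) (s r : config N) : config N := [ffun i => s i == r i].

Lemma spin_mulc (N : nat) (s r : config N) i : spin (mulc s r) i = spin s i * spin r i.
Proof. rewrite /spin /mulc ffunE; case: (s i); case: (r i) => /=; ring. Qed.

Lemma mulcK (N : nat) (s r : config N) : mulc s (mulc s r) = r.
Proof. apply/ffunP => i; rewrite !ffunE; by case: (s i); case: (r i). Qed.

Lemma mulc_inj (N : nat) (s : config N) : injective (mulc s).
Proof. move=> a b H; by rewrite -(mulcK s a) H mulcK. Qed.

Lemma Z_pos (N : nat) (J : 'I_N -> 'I_N -> R) : 0 < ising_Z J.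
Proof.
rewrite /ising_Z (bigD1 [ffun _ => true]) //=.
have := exp_pos (ising_H J [ffun _ => true]).
have : 0 <= \big[Rplus/R0]_(i | i != [ffun _ => true]) exp (ising_H J i).
  apply: (big_ind (fun x => 0 <= x)) => //; [lra|move=> *; lra|move=> *; apply: Rlt_le; apply: exp_pos].
move=> h1 h2; exact: Rplus_lt_le_0_compat.
Qed.

Lemma expect_ising (N : nat) (J : 'I_N -> 'I_N -> R) f :
  expect (ising J) f = (\rsum_(s : config N) (exp (ising_H J s) * f s)) / ising_Z J.
Proof.
rewrite /expect /ising /Rdiv Rmult_comm -sum_scale; apply: eq_bigr => s _; ring.
Qed.

Definition Aof (N p : nat) (idx : {ffun 'I_p -> 'I_N}) (s : config N) : R :=
  \rprod_(k : 'I_p) spin s (idx k).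

Lemma Aof_mulc (N p : nat) (idx : {ffun 'I_p -> 'I_N}) s r :
  Aof idx (mulc s r) = Aof idx s * Aof idx r.
Proof. rewrite /Aof -prod_split; apply: eq_bigr => k _; exact: spin_mulc. Qed.

Lemma Aof_abs (N p : nat) (idx : {ffun 'I_p -> 'I_N}) s : Rabs (Aof idx s) <= 1.
Proof. apply: prod_abs_le1 => k; rewrite Rabs_spin; lra. Qed.

Lemma H_mulc (N : nat) (J : 'I_N -> 'I_N -> R) s r :
  ising_H (fun i j => Rabs (J i j)) s + ising_H J (mulc s r) =
  ising_H (fun i j => Rabs (J i j) + J i j * spin r i * spin r j) s.
Proof.
rewrite /ising_H -sum_split; apply: eq_bigr => i _.
rewrite -sum_split; apply: eq_bigr => j _; rewrite !spin_mulc; ring.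
Qed.

Lemma key_ineq (N p : nat) (J : 'I_N -> 'I_N -> R) (idx : {ffun 'I_p -> 'I_N}) (e : R) :
  Rabs e <= 1 ->
  0 <= \rsum_(s : config N) \rsum_(t : config N)
        ((Aof idx s - e * Aof idx t) *
         (exp (ising_H (fun i j => Rabs (J i j)) s) * exp (ising_H J t))).
Proof.
move=> He.
rewrite (eq_bigr (fun s => \rsum_(r : config N)
   ((1 - e * Aof idx r) * (Aof idx s *
     exp (ising_H (fun i j => Rabs (J i j) + J i j * spin r i * spin r j) s))))); last first.
  move=> s _; rewrite (reindex_inj (@mulc_inj _ s)) /=; apply: eq_bigr => r _.
  rewrite Aof_mulc -H_mulc exp_plus; ring.
rewrite exchange_big /=; apply: sum_ge0 => r.
rewrite sum_scale; apply: Rmult_le_pos.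
  have := Aof_abs idx r; have := Rabs_mult e (Aof idx r).
  have := Rle_abs (e * Aof idx r); have := Rabs_pos e; have := Rabs_pos (Aof idx r); nra.
apply: griffiths => i j; case: (spin_cases r i) => ->; case: (spin_cases r j) => ->;
  have := Rle_abs (J i j); have := Rabs_Ropp (J i j); have := Rle_abs (- J i j); lra.
Qed.

Lemma ginibre (N p : nat) (J : 'I_N -> 'I_N -> R) (idx : {ffun 'I_p -> 'I_N}) :
  Rabs (expect (ising J) (Aof idx)) <= expect (ising (fun i j => Rabs (J i j))) (Aof idx).
Proof.
set Ja := fun i j => Rabs (J i j).
rewrite !expect_ising.
set NJ := \rsum_(s : config N) (exp (ising_H J s) * Aof idx s).
set NA := \rsum_(s : config N) (exp (ising_H Ja s) * Aof idx s).
have ZJ := Z_pos J; have ZA := Z_pos Ja.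
have E : forall e, \rsum_(s : config N) \rsum_(t : config N)
        ((Aof idx s - e * Aof idx t) *
         (exp (ising_H Ja s) * exp (ising_H J t))) = NA * ising_Z J - e * NJ * ising_Z Ja.
  move=> e.
  have P1 : NA * ising_Z J = \rsum_(s : config N) \rsum_(t : config N)
      (exp (ising_H Ja s) * Aof idx s * exp (ising_H J t)).
    rewrite /NA /ising_Z big_distrl /=; apply: eq_bigr => s _; by rewrite big_distrr.
  have P2 : NJ * ising_Z Ja = \rsum_(s : config N) \rsum_(t : config N)
      (exp (ising_H J t) * Aof idx t * exp (ising_H Ja s)).
    rewrite /NJ /ising_Z Rmult_comm big_distrl /=; apply: eq_bigr => s _.
    by rewrite big_distrr /=; apply: eq_bigr => t _; ring.
  rewrite Rmult_assoc P1 P2 /Rminus -sum_scale -sum_opp -sum_split.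
  apply: eq_bigr => s _; rewrite -sum_scale -sum_opp -sum_split.
  apply: eq_bigr => t _; ring.
have H1 := key_ineq J idx (e := 1); rewrite E in H1.
have H2 := key_ineq J idx (e := -1); rewrite E in H2.
have : Rabs 1 <= 1 by rewrite Rabs_R1; lra.
have : Rabs (-1) <= 1 by rewrite Rabs_Ropp Rabs_R1; lra.
move=> /H2 {}H2 /H1 {}H1.
rewrite /Rdiv Rabs_mult Rabs_inv (Rabs_right (ising_Z J)); last lra.
apply: (Rmult_le_reg_r (ising_Z J * ising_Z Ja)); first nra.
have -> : Rabs NJ * / ising_Z J * (ising_Z J * ising_Z Ja) = Rabs NJ * ising_Z Ja by field; lra.
have -> : NA * / ising_Z Ja * (ising_Z J * ising_Z Ja) = NA * ising_Z J by field; lra.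
case: (Rle_dec 0 NJ) => h.
  rewrite Rabs_right; lra.
rewrite Rabs_left; lra.
Qed.

Definition adjL (N : nat) (f : config N -> R) (L : R) : Prop :=
  forall s s' : config N, hamming s s' = 1%N -> Rabs (f s - f s') <= L.

Lemma hamming0 (N : nat) (x y : config N) : hamming x y = 0%N -> x = y.
Proof.
rewrite /hamming => /eqP; rewrite cards_eq0 => /eqP H.
apply/ffunP => i; apply/eqP; apply/negPn/negP => Hi.
have : i \in [set i | x i != y i] by rewrite inE.
by rewrite H inE.
Qed.

Lemma lip_global (N : nat) (f : config N -> R) (L : R) :
  adjL f L -> forall x y, Rabs (f x - f y) <= L * INR (hamming x y).
Proof.
move=> HL.
suff H : forall n x y, hamming x y = n -> Rabs (f x - f y) <= L * INR n.
  by move=> x y; exact: H.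
elim=> [|n IH] x y Hn.
  rewrite (hamming0 Hn) Rminus_eq_0 Rabs_R0 /=; lra.
have : (0 < #|[set i | x i != y i]|)%N.
  by move: Hn; rewrite /hamming => ->.
case/card_gt0P => i; rewrite inE => Hi.
pose x' : config N := [ffun k => if k == i then y k else x k].
have H1 : hamming x x' = 1%N.
  rewrite /hamming -(cards1 i); have -> // : [set k | x k != x' k] = [set i].
  apply/setP => k; rewrite !inE ffunE; case: (k =P i) => [->|_]; by rewrite ?eqxx.
have H2 : hamming x' y = n.
  move: Hn; rewrite /hamming (cardsD1 i) inE Hi add1n => -[<-].
  have -> // : [set k | x' k != y k] = [set k | x k != y k] :\ i.
  apply/setP => k; rewrite !inE ffunE.
  case: (k =P i) => [->|]; by rewrite ?eqxx.
have := HL _ _ H1; have := IH _ _ H2.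
have := Rabs_triang (f x - f x') (f x' - f y).
replace (f x - f x' + (f x' - f y)) with (f x - f y) by ring.
rewrite S_INR; lra.
Qed.

Lemma hamming_leN (N : nat) (x y : config N) : (hamming x y <= N)%N.
Proof. by apply: leq_trans (max_card _) _; rewrite card_ord. Qed.

Definition Pop (N : nat) (P : config N -> config N -> R) (h : config N -> R) (x : config N) : R :=
  \rsum_(y : config N) (P x y * h y).

Lemma lip_Pop (N : nat) (P : config N -> config N -> R) (theta L : R) (h : config N -> R) :
  (forall s s' : config N, hamming s s' = 1%N -> W1_le (P s) (P s') theta) ->
  adjL h L -> 0 <= L -> adjL (Pop P h) (L * theta).
Proof.
move=> HW HL L0 s s' Hss; apply: Rle_plus_epsilon => eps Heps.
have Heps' : 0 < eps / (L + 1) by apply: Rdiv_lt_0_compat; lra.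
have [g [[Hg0 [Hrow Hcol]] Hcost]] := HW s s' Hss _ Heps'.
have E1 : Pop P h s = \rsum_(x : config N) \rsum_(y : config N) (g x y * h x).
  rewrite /Pop; apply: eq_bigr => x _; by rewrite -Hrow big_distrl.
have E2 : Pop P h s' = \rsum_(x : config N) \rsum_(y : config N) (g x y * h y).
  rewrite /Pop exchange_big /=; apply: eq_bigr => y _; by rewrite -Hcol big_distrl.
have E3 : Pop P h s - Pop P h s' =
   \rsum_(x : config N) \rsum_(y : config N) (g x y * (h x - h y)).
  rewrite E1 E2 /Rminus -sum_opp -sum_split; apply: eq_bigr => x _.
  rewrite -sum_opp -sum_split; apply: eq_bigr => y _; ring.
rewrite E3.
apply: Rle_trans (sum_abs _) _.
apply: (@Rle_trans _ (\rsum_(x : config N) \rsum_(y : config N) (L * (g x y * Defs.dist x y))) _).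
  apply: sum_le => x; apply: Rle_trans (sum_abs _) _; apply: sum_le => y.
  rewrite Rabs_mult Rabs_right; last by have := Hg0 x y; lra.
  have := lip_global HL x y; have := Hg0 x y; rewrite /Defs.dist; nra.
have -> : \rsum_(x : config N) \rsum_(y : config N) (L * (g x y * Defs.dist x y)) =
          L * \rsum_(x : config N) \rsum_(y : config N) (g x y * Defs.dist x y).
  rewrite -sum_scale; apply: eq_bigr => x _; by rewrite sum_scale.
have : L * (eps / (L + 1)) <= eps.
  apply: (Rmult_le_reg_r (L + 1)); first lra.
  have -> : L * (eps / (L + 1)) * (L + 1) = L * eps by field; lra.
  nra.
nra.
Qed.

Lemma Pop_affine (N : nat) (P : config N -> config N -> R) (x : config N) a b h :
  \rsum_(y : config N) P x y = R1 ->
  Pop P (fun y => a + b * h y) x = a + b * Pop P h x.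
Proof.
move=> H; rewrite /Pop.
have -> : \rsum_(y : config N) (P x y * (a + b * h y)) =
  \rsum_(y : config N) (a * P x y) + \rsum_(y : config N) (b * (P x y * h y)).
  rewrite -sum_split; apply: eq_bigr => y _; ring.
by rewrite !sum_scale H Rmult_1_r.
Qed.

Lemma exp_quad z : z <= 1/2 -> exp z <= 1 + z + 2 * z^2.
Proof.
move=> Hz.
have Hv := exp_ineq1_le (- z).
have Huv : exp z * exp (- z) = 1 by rewrite -exp_plus Rplus_opp_r exp_0.
have Hu := exp_pos z.
have H1 : exp z * (1 - z) <= 1 by nra.
have H2 : 1 <= (1 + z + 2 * z^2) * (1 - z) by nra.
apply: (Rmult_le_reg_r (1 - z)); lra.
Qed.

Lemma stat_E (N : nat) (pi : config N -> R) (P : config N -> config N -> R) f :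
  stationary pi P ->
  \rsum_(x : config N) (pi x * Pop P f x) = \rsum_(y : config N) (pi y * f y).
Proof.
move=> Hs; rewrite /Pop.
under eq_bigr do rewrite big_distrr.
rewrite exchange_big /=; apply: eq_bigr => y _.
rewrite -(Hs y) big_distrl /=; apply: eq_bigr => x _; ring.
Qed.

Lemma hoeff_step (N : nat) (P : config N -> config N -> R) (h : config N -> R) (L lam : R) x :
  markov_kernel P -> single_site P -> adjL h L -> 0 <= L -> Rabs lam * L <= 1/4 ->
  Pop P (fun y => exp (lam * h y)) x <= exp (lam * Pop P h x) * exp (8 * lam^2 * L^2).
Proof.
move=> [HP0 HP1] Hss HL L0 Hlam.
set m := Pop P h x.
have Hsupp : forall y, P x y <> 0 -> Rabs (h y - h x) <= L.
  move=> y /Hss Hy; have := lip_global HL y x.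
  have : INR (hamming y x) <= 1.
    have -> : hamming y x = hamming x y.
      rewrite /hamming; have -> // : [set k | y k != x k] = [set k | x k != y k].
      apply/setP => k; by rewrite !inE eq_sym.
    by apply: (le_INR _ 1); apply/leP.
  nra.
have Hm : Rabs (m - h x) <= L.
  have -> : m - h x = Pop P (fun y => - h x + 1 * h y) x.
    rewrite Pop_affine //; rewrite /m; ring.
  rewrite /Pop; apply: Rle_trans (sum_abs _) _.
  apply: (@Rle_trans _ (\rsum_(y : config N) (L * P x y)) _); last first.
    rewrite sum_scale HP1; lra.
  apply: sum_le => y; rewrite Rabs_mult Rabs_right; last by have := HP0 x y; lra.
  case: (Req_dec (P x y) 0) => [->|Hy]; first lra.
  have := Hsupp y Hy; replace (- h x + 1 * h y) with (h y - h x) by ring.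
  have := HP0 x y; nra.
apply: (@Rle_trans _ (Pop P (fun y => exp (lam * m) * (1 + 8 * lam^2 * L^2)
                                     + (exp (lam * m) * lam) * h y
                                     - (exp (lam * m) * lam) * m) x) _).
  apply: sum_le => y.
  case: (Req_dec (P x y) 0) => [->|Hy]; first lra.
  apply: Rmult_le_compat_l; first by have := HP0 x y; lra.
  have Hy2 := Hsupp y Hy.
  have Hd : Rabs (h y - m) <= 2 * L.
    have := Rabs_triang (h y - h x) (h x - m).
    rewrite -Rabs_Ropp in Hm; replace (- (m - h x)) with (h x - m) in Hm by ring.
    replace (h y - h x + (h x - m)) with (h y - m) by ring; lra.
  set z := lam * (h y - m).
  have Hz : Rabs z <= 1/2.
    rewrite /z Rabs_mult; have := Rabs_pos lam; nra.
  have Hz2 : z^2 <= 4 * lam^2 * L^2.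
    have : z^2 = Rabs z * Rabs z by rewrite /= Rmult_1_r -Rabs_mult Rabs_right; nra.
    rewrite /z Rabs_mult => ->.
    have : Rabs lam ^ 2 = lam ^2 by rewrite RPow_abs; apply: Rabs_right; nra.
    have Ha := Rabs_pos lam; have Hb := Rabs_pos (h y - m).
    have H3 : Rabs lam * Rabs (h y - m) <= Rabs lam * (2 * L) by apply: Rmult_le_compat_l.
    have H4 : 0 <= Rabs lam * Rabs (h y - m) by apply: Rmult_le_pos.
    have H5 := Rmult_le_compat _ _ _ _ H4 H4 H3 H3.
    move=> E; rewrite /= Rmult_1_r in E; nra.
  have Hq := exp_quad (Rle_trans _ _ _ (Rle_abs z) Hz).
  have -> : lam * h y = lam * m + z by rewrite /z; ring.
  rewrite exp_plus.
  have := exp_pos (lam * m); rewrite /z in Hq Hz2 *; nra.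
have -> : Pop P (fun y => exp (lam * m) * (1 + 8 * lam^2 * L^2)
                          + (exp (lam * m) * lam) * h y
                          - (exp (lam * m) * lam) * m) x
        = exp (lam * m) * (1 + 8 * lam^2 * L^2) - (exp (lam * m) * lam) * m
          + (exp (lam * m) * lam) * m.
  have := Pop_affine (exp (lam * m) * (1 + 8 * lam^2 * L^2) - (exp (lam * m) * lam) * m)
            (exp (lam * m) * lam) h (HP1 x).
  rewrite -/m => <-; rewrite /Pop; apply: eq_bigr => y _; ring.
have := exp_ineq1_le (8 * lam^2 * L^2); have := exp_pos (lam * m); nra.
Qed.

Lemma adjL_mono (N : nat) (f : config N -> R) L L' : adjL f L -> L <= L' -> adjL f L'.
Proof. move=> H HL s s' Hs; have := H s s' Hs; lra. Qed.

Lemma pow_le1 x n : 0 <= x <= 1 -> 0 <= x ^ n <= 1.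
Proof. move=> Hx; split; first by apply: pow_le; lra. rewrite -(pow1 n); apply: pow_incr; lra. Qed.

Lemma pow_sq x n : (x ^ n) ^ 2 = (x ^ 2) ^ n.
Proof. rewrite -!pow_mult; f_equal; lia. Qed.

Lemma lip_iter (N : nat) (P : config N -> config N -> R) (theta L : R) (h0 : config N -> R) :
  (forall s s' : config N, hamming s s' = 1%N -> W1_le (P s) (P s') theta) ->
  adjL h0 L -> 0 <= L -> 0 <= theta ->
  forall t, adjL (iter t (Pop P) h0) (L * theta ^ t).
Proof.
move=> HW H0 L0 T0; elim=> [|t IH] /=; first by apply: adjL_mono H0 _; lra.
apply: adjL_mono (lip_Pop HW IH _) _.
  by apply: Rmult_le_pos => //; apply: pow_le.
lra.
Qed.

Lemma E_iter (N : nat) (pi : config N -> R) (P : config N -> config N -> R) h0 :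
  stationary pi P -> forall t,
  \rsum_(x : config N) (pi x * iter t (Pop P) h0 x) = \rsum_(x : config N) (pi x * h0 x).
Proof. move=> Hs; elim=> [|t IH] //=; by rewrite stat_E. Qed.

Lemma mgf_iter (N : nat) (pi : config N -> R) (P : config N -> config N -> R)
  (theta L lam : R) (h0 : config N -> R) :
  markov_kernel P -> single_site P -> stationary pi P ->
  (forall s s' : config N, hamming s s' = 1%N -> W1_le (P s) (P s') theta) ->
  adjL h0 L -> 0 <= L -> 0 <= theta < 1 -> (forall x, 0 <= pi x) ->
  Rabs lam * L <= 1/4 ->
  forall T, \rsum_(x : config N) (pi x * exp (lam * h0 x)) <=
     (\rsum_(x : config N) (pi x * exp (lam * iter T (Pop P) h0 x))) *
     exp (8 * lam^2 * L^2 * ((1 - (theta^2)^T) / (1 - theta^2))).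
Proof.
move=> HM Hss Hs HW H0 L0 Ht Hpi Hlam.
have Hq : 1 - theta^2 <> 0 by nra.
elim=> [|T IH].
  have -> : (1 - (theta^2)^0) / (1 - theta^2) = 0 by rewrite /= /Rdiv; ring.
  rewrite Rmult_0_r exp_0 /= Rmult_1_r; lra.
apply: Rle_trans IH _.
have HT := lip_iter HW H0 L0 (proj1 Ht) T.
have Hp := pow_le1 T (conj (proj1 Ht) (Rlt_le _ _ (proj2 Ht))).
have HlT : Rabs lam * (L * theta ^ T) <= 1/4.
  have := Rabs_pos lam; nra.
rewrite -(stat_E (fun y => exp (lam * iter T (Pop P) h0 y)) Hs).
set hT := iter T (Pop P) h0.
have Hstep : forall x, Pop P (fun y => exp (lam * hT y)) x <=
    exp (lam * iter T.+1 (Pop P) h0 x) * exp (8 * lam^2 * (L * theta ^ T)^2).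
  move=> x; rewrite iterS -/hT; apply: hoeff_step => //.
  by apply: Rmult_le_pos => //; lra.
set S := (1 - (theta^2)^T) / (1 - theta^2).
have ES : (1 - (theta^2)^T.+1) / (1 - theta^2) = S + (theta^2)^T.
  rewrite /S /=; field; lra.
rewrite ES.
have -> : exp (8 * lam ^ 2 * L ^ 2 * (S + (theta ^ 2) ^ T)) =
          exp (8 * lam ^ 2 * (L * theta ^ T) ^ 2) * exp (8 * lam ^ 2 * L ^ 2 * S).
  rewrite -exp_plus Rpow_mult_distr pow_sq; f_equal; ring.
rewrite -Rmult_assoc; apply: Rmult_le_compat_r; first by apply: Rlt_le; apply: exp_pos.
rewrite big_distrl /=; apply: sum_le => x.
rewrite Rmult_assoc; apply: Rmult_le_compat_l => //; exact: Hstep.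
Qed.

Lemma mgf_final (N : nat) (pi : config N -> R) (P : config N -> config N -> R)
  (theta L lam : R) (h0 : config N -> R) :
  markov_kernel P -> single_site P -> stationary pi P ->
  (forall s s' : config N, hamming s s' = 1%N -> W1_le (P s) (P s') theta) ->
  adjL h0 L -> 0 <= L -> 0 <= theta < 1 -> (forall x, 0 <= pi x) ->
  \rsum_(x : config N) pi x = 1 ->
  \rsum_(x : config N) (pi x * h0 x) = 0 ->
  Rabs lam * L <= 1/4 -> 0 < INR N ->
  \rsum_(x : config N) (pi x * exp (lam * h0 x)) <= exp (1/4 + 8 * lam^2 * L^2 / (1 - theta)).
Proof.
move=> HM Hss Hs HW H0 L0 Ht Hpi Hpi1 HE0 Hlam HN.
have [T HTn] : exists T, theta ^ T < / INR N.
  have : Rabs theta < 1 by rewrite Rabs_right; lra.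
  move=> /pow_lt_1_zero /(_ (/ INR N)) [|T HT]; first by apply: Rinv_0_lt_compat.
  exists T; have := HT T (le_n _); rewrite Rabs_right //; apply: Rle_ge; apply: pow_le; lra.
have Hp := pow_le1 T (conj (proj1 Ht) (Rlt_le _ _ (proj2 Ht))).
have := mgf_iter HM Hss Hs HW H0 L0 Ht Hpi Hlam T.
set hT := iter T (Pop P) h0.
have HT := lip_iter HW H0 L0 (proj1 Ht) T; rewrite -/hT in HT.
have EhT : \rsum_(x : config N) (pi x * hT x) = 0 by rewrite /hT E_iter.
have HTN : theta ^ T * INR N <= 1.
  have : theta ^ T * INR N < / INR N * INR N by apply: Rmult_lt_compat_r.
  rewrite Rinv_l; lra.
have Hgl : forall x y, Rabs (hT x - hT y) <= L.
  move=> x y; apply: Rle_trans (lip_global HT x y) _.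
  have : INR (hamming x y) <= INR N by apply: le_INR; apply/leP; exact: hamming_leN.
  have := pos_INR (hamming x y); have : 0 <= L * theta ^ T by apply: Rmult_le_pos; lra.
  nra.
have Hbd : forall x, Rabs (hT x) <= L.
  move=> x.
  have -> : hT x = \rsum_(y : config N) (pi y * (hT x - hT y)).
    have -> : \rsum_(y : config N) (pi y * (hT x - hT y)) =
      hT x * (\rsum_(y : config N) pi y) - (\rsum_(y : config N) (pi y * hT y)).
      rewrite /Rminus -sum_opp -sum_scale -sum_split; apply: eq_bigr => y _; ring.
    rewrite Hpi1 EhT; ring.
  apply: Rle_trans (sum_abs _) _.
  apply: (@Rle_trans _ (\rsum_(y : config N) (pi y * L))).
    apply: sum_le => y; rewrite Rabs_mult Rabs_right; last by have := Hpi y; lra.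
    apply: Rmult_le_compat_l; [exact: Hpi | exact: Hgl].
  rewrite (eq_bigr (fun y => L * pi y)); last by move=> y _; ring.
  rewrite sum_scale Hpi1; lra.
have Hexp : \rsum_(x : config N) (pi x * exp (lam * hT x)) <= exp (1/4).
  apply: (@Rle_trans _ (\rsum_(x : config N) (exp (1/4) * pi x))).
    apply: sum_le => x; rewrite Rmult_comm; apply: Rmult_le_compat_r; first exact: Hpi.
    apply: exp_le; have := Rle_abs (lam * hT x); rewrite Rabs_mult.
    have := Hbd x; have := Rabs_pos lam; have := Rabs_pos (hT x); nra.
  rewrite sum_scale Hpi1; lra.
have HS : (1 - (theta ^ 2) ^ T) / (1 - theta ^ 2) <= / (1 - theta).
  have Hq : 0 <= (theta ^ 2) ^ T by apply: pow_le; nra.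
  have H1 : 0 < 1 - theta ^ 2 by nra.
  apply: (Rmult_le_reg_r (1 - theta ^ 2)) => //.
  have -> : (1 - (theta ^ 2) ^ T) / (1 - theta ^ 2) * (1 - theta ^ 2) = 1 - (theta ^ 2) ^ T
    by field; lra.
  apply: (Rmult_le_reg_l (1 - theta)); first lra.
  rewrite -Rmult_assoc Rinv_r; last lra.
  nra.
move=> H; apply: Rle_trans H _.
have Ha : 0 <= 8 * lam ^ 2 * L ^ 2 by have := pow2_ge_0 lam; have := pow2_ge_0 L; nra.
have Hs1 : exp (8 * lam ^ 2 * L ^ 2 * ((1 - (theta ^ 2) ^ T) / (1 - theta ^ 2)))
           <= exp (8 * lam ^ 2 * L ^ 2 / (1 - theta)).
  apply: exp_le; rewrite /Rdiv; apply: Rmult_le_compat_l => //.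
rewrite exp_plus; apply: Rmult_le_compat => //.
- apply: sum_ge0 => x; apply: Rmult_le_pos; [exact: Hpi|apply: Rlt_le; exact: exp_pos].
- apply: Rlt_le; exact: exp_pos.
Qed.

Definition Mag (N : nat) (s : config N) : R := \rsum_(i : 'I_N) spin s i.

Lemma iter_Rplus n c : iter n (Rplus c) R0 = INR n * c.
Proof. elim: n => [|n IH]; first by rewrite /=; lra. rewrite iterS IH S_INR; lra. Qed.

Lemma iter_Rmult n c : iter n (Rmult c) R1 = c ^ n.
Proof. elim: n => [|n IH] //; rewrite iterS IH /=; ring. Qed.

Lemma Mag_lip (N : nat) (s s' : config N) :
  Rabs (Mag s - Mag s') <= 2 * INR (hamming s s').
Proof.
rewrite /Mag /Rminus -sum_opp -sum_split; apply: Rle_trans (sum_abs _) _.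
have -> : \rsum_(i : 'I_N) Rabs (spin s i + - spin s' i) =
          \rsum_(i : 'I_N) (if i \in [set k | s k != s' k] then 2 else 0).
  apply: eq_bigr => i _; rewrite inE /spin.
  case: (s i); case: (s' i) => /=;
    first [ (rewrite Rabs_right; lra) | (rewrite Rabs_left; lra) ].
rewrite -big_mkcond big_const iter_Rplus /hamming; lra.
Qed.

Lemma Mag_adj (N : nat) : adjL (@Mag N) 2.
Proof. move=> s s' H; have := Mag_lip s s'; rewrite H /=; lra. Qed.

Lemma Mag_bound (N : nat) (s : config N) : Rabs (Mag s) <= INR N.
Proof.
apply: Rle_trans (sum_abs _) _.
rewrite (eq_bigr (fun _ => 1)); last by move=> i _; rewrite Rabs_spin.
rewrite sum_const_R card_ord; lra.
Qed.

Definition flip (N : nat) (s : config N) : config N := [ffun i => ~~ s i].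

Lemma flipK (N : nat) (s : config N) : flip (flip s) = s.
Proof. apply/ffunP => i; by rewrite !ffunE negbK. Qed.

Lemma flip_inj (N : nat) : injective (@flip N).
Proof. move=> a b H; by rewrite -(flipK a) H flipK. Qed.

Lemma spin_flip (N : nat) (s : config N) i : spin (flip s) i = - spin s i.
Proof. rewrite /spin ffunE; case: (s i) => /=; ring. Qed.

Lemma ising_flip (N : nat) (J : 'I_N -> 'I_N -> R) s : ising J (flip s) = ising J s.
Proof.
rewrite /ising; f_equal; f_equal; rewrite /ising_H; apply: eq_bigr => i _.
apply: eq_bigr => j _; rewrite !spin_flip; ring.
Qed.

Lemma Mag_flip (N : nat) (s : config N) : Mag (flip s) = - Mag s.
Proof. rewrite /Mag -sum_opp; apply: eq_bigr => i _; exact: spin_flip. Qed.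

Lemma E_Mag0 (N : nat) (J : 'I_N -> 'I_N -> R) :
  \rsum_(s : config N) (ising J s * Mag s) = 0.
Proof.
have H : \rsum_(s : config N) (ising J s * Mag s) = - \rsum_(s : config N) (ising J s * Mag s).
  rewrite {1}(reindex_inj (@flip_inj N)) /= -sum_opp; apply: eq_bigr => s _.
  rewrite ising_flip Mag_flip; ring.
lra.
Qed.

Lemma ising_ge0 (N : nat) (J : 'I_N -> 'I_N -> R) s : 0 <= ising J s.
Proof.
rewrite /ising /Rdiv; apply: Rmult_le_pos; first by apply: Rlt_le; exact: exp_pos.
apply: Rlt_le; apply: Rinv_0_lt_compat; exact: Z_pos.
Qed.

Lemma ising_sum1 (N : nat) (J : 'I_N -> 'I_N -> R) : \rsum_(s : config N) ising J s = 1.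
Proof.
rewrite /ising (eq_bigr (fun s => / ising_Z J * exp (ising_H J s))); last by move=> s _; rewrite /Rdiv; ring.
rewrite sum_scale -/(ising_Z J) Rinv_l //; have := Z_pos J; lra.
Qed.

Lemma theta_nonneg (N : nat) (P : config N -> config N -> R) (theta : R) :
  (0 < N)%N ->
  (forall s s' : config N, hamming s s' = 1%N -> W1_le (P s) (P s') theta) -> 0 <= theta.
Proof.
move=> HN HW.
pose i0 : 'I_N := Ordinal HN.
pose s0 : config N := [ffun _ => true].
pose s1 : config N := [ffun i => i != i0].
have H1 : hamming s0 s1 = 1%N.
  rewrite /hamming -(cards1 i0); have -> // : [set i | s0 i != s1 i] = [set i0].
  apply/setP => i; rewrite !inE !ffunE; by case: (i =P i0).
apply: (@Rle_trans _ (theta + 0)); last lra.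
apply: Rle_plus_epsilon => eps Heps.
have [g [[Hg0 _] Hc]] := HW s0 s1 H1 eps Heps.
have : 0 <= \rsum_(x : config N) \rsum_(y : config N) (g x y * Defs.dist x y).
  apply: sum_ge0 => x; apply: sum_ge0 => y; apply: Rmult_le_pos => //; exact: pos_INR.
lra.
Qed.

Lemma exp_pow_n y n : exp y ^ n = exp (INR n * y).
Proof.
elim: n => [|n IH]; first by rewrite /= Rmult_0_l exp_0.
change (exp y ^ n.+1) with (exp y * exp y ^ n); rewrite IH -exp_plus S_INR; f_equal; ring.
Qed.

Lemma pow_exp_bound x p : 0 <= x -> (0 < p)%N -> x ^ p <= INR p ^ p * exp x.
Proof.
move=> Hx Hp.
have Hp' : 0 < INR p by apply: lt_0_INR; apply/ltP.
have H1 : x / INR p <= exp (x / INR p).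
  have := exp_ineq1_le (x / INR p); lra.
have H2 : (x / INR p) ^ p <= exp (x / INR p) ^ p.
  apply: pow_incr; split => //; rewrite /Rdiv; apply: Rmult_le_pos => //; apply: Rlt_le; exact: Rinv_0_lt_compat.
rewrite exp_pow_n in H2.
have E : INR p * (x / INR p) = x by field; lra.
rewrite E in H2.
have -> : x ^ p = INR p ^ p * (x / INR p) ^ p.
  rewrite -Rpow_mult_distr; f_equal; field; lra.
apply: Rmult_le_compat_l => //; apply: pow_le; lra.
Qed.

Lemma Mag_pow_bound (N : nat) (s : config N) (lam : R) (p : nat) :
  0 < lam -> (0 < p)%N ->
  Rabs (Mag s) ^ p <= (INR p / lam) ^ p * (exp (lam * Mag s) + exp (- lam * Mag s)).
Proof.
move=> Hl Hp.
have H0 : 0 <= lam * Rabs (Mag s) by apply: Rmult_le_pos; [lra|exact: Rabs_pos].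
have H1 := pow_exp_bound H0 Hp.
have H2 : exp (lam * Rabs (Mag s)) <= exp (lam * Mag s) + exp (- lam * Mag s).
  have := exp_pos (lam * Mag s); have := exp_pos (- lam * Mag s).
  case: (Rle_dec 0 (Mag s)) => h.
    rewrite Rabs_right; lra.
  rewrite Rabs_left; last lra.
  replace (lam * - Mag s) with (- lam * Mag s) by ring; lra.
have -> : Rabs (Mag s) ^ p = (lam * Rabs (Mag s)) ^ p / lam ^ p.
  rewrite Rpow_mult_distr; field; apply: pow_nonzero; lra.
have Hlp : 0 < lam ^ p by apply: pow_lt.
have -> : (INR p / lam) ^ p = INR p ^ p / lam ^ p.
  rewrite /Rdiv Rpow_mult_distr pow_inv //.
apply: (Rmult_le_reg_r (lam ^ p)) => //.
have -> : (lam * Rabs (Mag s)) ^ p / lam ^ p * lam ^ p = (lam * Rabs (Mag s)) ^ p by field; lra.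
have -> : INR p ^ p / lam ^ p * (exp (lam * Mag s) + exp (- lam * Mag s)) * lam ^ p =
          INR p ^ p * (exp (lam * Mag s) + exp (- lam * Mag s)) by field; lra.
apply: Rle_trans H1 _; apply: Rmult_le_compat_l => //.
apply: pow_le; exact: pos_INR.
Qed.

Lemma moment_bound (p : nat) (alpha : R) : (1 <= p)%N -> 0 < alpha ->
  exists C : R, 0 < C /\
    forall (N : nat) (J : 'I_N -> 'I_N -> R),
      contracting (ising (fun i j => Rabs (J i j))) (1 - alpha / INR N) ->
      \rsum_(s : config N) (ising (fun i j => Rabs (J i j)) s * Rabs (Mag s) ^ p)
        <= C * sqrt (INR N) ^ p.
Proof.
move=> Hp Ha.
have Hsa := sqrt_lt_R0 _ Ha.
have Hp' : 0 < INR p by apply: lt_0_INR; apply/ltP.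
set C1 := 6 * (8 * INR p / sqrt alpha) ^ p.
set C2 := sqrt alpha ^ p.
have HC1 : 0 < C1.
  rewrite /C1; apply: Rmult_lt_0_compat; first lra; apply: pow_lt.
  rewrite /Rdiv; apply: Rmult_lt_0_compat; first lra; exact: Rinv_0_lt_compat.
have HC2 : 0 < C2 by apply: pow_lt.
exists (C1 + C2); split; first lra.
move=> N J [Ht [P [HM [Hs [Hss HW]]]]].
set Ja := fun i j => Rabs (J i j).
set pi := ising Ja.
have Hpi := @ising_ge0 N Ja.
have Hpi1 := @ising_sum1 N Ja.
have HsN := sqrt_pos (INR N).
have HsNp : 0 <= sqrt (INR N) ^ p by apply: pow_le.
case: (Rlt_le_dec (INR N) alpha) => HNa.
-
  apply: (@Rle_trans _ (\rsum_(s : config N) (pi s * INR N ^ p))).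
    apply: sum_le => s; apply: Rmult_le_compat_l; first exact: Hpi.
    apply: pow_incr; split; [exact: Rabs_pos|exact: Mag_bound].
  rewrite (eq_bigr (fun s => INR N ^ p * pi s)); last by move=> s _; ring.
  rewrite sum_scale Hpi1 Rmult_1_r.
  have HN0 := pos_INR N.
  have -> : INR N ^ p = sqrt (INR N) ^ p * sqrt (INR N) ^ p.
    by rewrite -Rpow_mult_distr sqrt_sqrt.
  have Hc2 : sqrt (INR N) ^ p <= C2.
    rewrite /C2; apply: pow_incr; split => //; apply: sqrt_le_1_alt; lra.
  have := Rmult_le_compat_r _ _ _ HsNp Hc2.
  nra.
-
  have HN : 0 < INR N by lra.
  have HN' : (0 < N)%N by apply/ltP; apply: INR_lt; rewrite /=; lra.
  have Ht0 := theta_nonneg HN' HW.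
  have Hsn := sqrt_lt_R0 _ HN.
  set lam := sqrt alpha / (8 * sqrt (INR N)).
  have Hlam : 0 < lam by rewrite /lam /Rdiv; apply: Rmult_lt_0_compat => //; apply: Rinv_0_lt_compat; lra.
  have Hsle : sqrt alpha <= sqrt (INR N) by apply: sqrt_le_1_alt.
  have Hlam8 : lam * 2 <= 1 / 4.
    rewrite /lam; apply: (Rmult_le_reg_r (8 * sqrt (INR N))); first lra.
    have -> : sqrt alpha / (8 * sqrt (INR N)) * 2 * (8 * sqrt (INR N)) = 2 * sqrt alpha by field; lra.
    lra.
  have Hlam2 : 8 * lam ^ 2 * 2 ^ 2 / (1 - (1 - alpha / INR N)) = 1 / 2.
    rewrite /lam; have := sqrt_sqrt alpha; have := sqrt_sqrt (INR N).
    move=> /(_ (Rlt_le _ _ HN)) EN /(_ (Rlt_le _ _ Ha)) Ea.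
    have -> : 1 - (1 - alpha / INR N) = alpha / INR N by ring.
    rewrite -{2}Ea -{2}EN; field; lra.
  have HE0 : \rsum_(x : config N) (pi x * Mag x) = 0 by exact: E_Mag0.
  have Hmgf : forall l, Rabs l = lam ->
      \rsum_(x : config N) (pi x * exp (l * Mag x)) <= 3.
    move=> l Hl.
    have Hl2 : l ^ 2 = lam ^ 2 by rewrite -Hl pow2_abs.
    have Hl' : Rabs l * 2 <= 1/4 by rewrite Hl.
    have H2le : 0 <= 2 by lra.
    have H := mgf_final (lam := l) HM Hss Hs HW (@Mag_adj N) H2le (conj Ht0 Ht) Hpi Hpi1 HE0 Hl' HN; apply: Rle_trans H _.
    rewrite Hl2 Hlam2.
    apply: (@Rle_trans _ (exp 1)); last exact: exp_le_3.
    apply: exp_le; lra.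
  apply: (@Rle_trans _ (\rsum_(s : config N)
      (pi s * ((INR p / lam) ^ p * (exp (lam * Mag s) + exp (- lam * Mag s)))))).
    apply: sum_le => s; apply: Rmult_le_compat_l; first exact: Hpi.
    exact: Mag_pow_bound.
  have -> : \rsum_(s : config N) (pi s * ((INR p / lam) ^ p * (exp (lam * Mag s) + exp (- lam * Mag s))))
        = (INR p / lam) ^ p * (\rsum_(s : config N) (pi s * exp (lam * Mag s)) +
                               \rsum_(s : config N) (pi s * exp (- lam * Mag s))).
    rewrite -sum_split -sum_scale; apply: eq_bigr => s _; ring.
  have H1 := Hmgf lam (Rabs_right _ (Rle_ge _ _ (Rlt_le _ _ Hlam))).
  have H2 := Hmgf (- lam) (eq_trans (Rabs_Ropp lam) (Rabs_right _ (Rle_ge _ _ (Rlt_le _ _ Hlam)))).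
  have Hpl : 0 <= (INR p / lam) ^ p.
    apply: pow_le; rewrite /Rdiv; apply: Rmult_le_pos; [lra|apply: Rlt_le; exact: Rinv_0_lt_compat].
  have -> : INR p / lam = (8 * INR p / sqrt alpha) * sqrt (INR N).
    rewrite /lam; field; lra.
  rewrite Rpow_mult_distr.
  have HK : 0 <= (8 * INR p / sqrt alpha) ^ p.
    apply: pow_le; rewrite /Rdiv; apply: Rmult_le_pos; [lra|apply: Rlt_le; exact: Rinv_0_lt_compat].
  have := Rmult_le_pos _ _ HK HsNp.
  rewrite /C1; nra.
Qed.

Lemma supnorm_ge0 (N p : nat) (B : {ffun 'I_p -> 'I_N} -> R) : 0 <= tensor_supnorm B.
Proof.
rewrite /tensor_supnorm; apply: (big_ind (fun x => 0 <= x)); first lra.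
  move=> x y Hx _; apply: Rle_trans Hx (Rmax_l _ _).
move=> i _; exact: Rabs_pos.
Qed.

Lemma supnorm_ge (N p : nat) (B : {ffun 'I_p -> 'I_N} -> R) idx :
  Rabs (B idx) <= tensor_supnorm B.
Proof.
rewrite /tensor_supnorm.
have : idx \in index_enum {ffun 'I_p -> 'I_N} by rewrite mem_index_enum.
elim: (index_enum _) => [|a r IH] //.
rewrite inE big_cons /= => /orP [/eqP ->|/IH H]; first exact: Rmax_l.
apply: Rle_trans H (Rmax_r _ _).
Qed.

Lemma sum_Aof (N p : nat) (s : config N) :
  \rsum_(idx : {ffun 'I_p -> 'I_N}) Aof idx s = Mag s ^ p.
Proof.
rewrite /Aof /Mag.
have -> : \rsum_(idx : {ffun 'I_p -> 'I_N}) \rprod_(k : 'I_p) spin s (idx k) =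
          \rprod_(k : 'I_p) \rsum_(i : 'I_N) spin s i by rewrite bigA_distr_bigA.
by rewrite big_const_ord iter_Rmult.
Qed.

Theorem lemma3 :
  forall (p : nat) (alpha : R), (1 <= p)%N -> 0 < alpha ->
  exists C : R, 0 < C /\
    forall (N : nat) (J : 'I_N -> 'I_N -> R),
      contracting (ising (fun i j => Rabs (J i j))) (1 - alpha / INR N) ->
      forall B : {ffun 'I_p -> 'I_N} -> R,
        Rabs (expect (ising J) (tensor_poly B))
          <= C * tensor_supnorm B * sqrt (INR N) ^ p.
Proof.
move=> p alpha Hp Ha.
have [C [HC HM]] := moment_bound Hp Ha.
exists C; split => // N J Hc B.
set Ja := fun i j => Rabs (J i j).
have E1 : expect (ising J) (tensor_poly B) =
   \rsum_(idx : {ffun 'I_p -> 'I_N}) (B idx * expect (ising J) (Aof idx)).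
  rewrite /expect /tensor_poly.
  under eq_bigr do rewrite big_distrr.
  rewrite exchange_big /=; apply: eq_bigr => idx _.
  rewrite big_distrr /=; apply: eq_bigr => s _; exact: (fun a b c => (ltac:(ring) : a * (b * c) = b * (a * c))) _ _ _.
rewrite E1; apply: Rle_trans (sum_abs _) _.
have Hn := supnorm_ge0 B.
apply: (@Rle_trans _ (\rsum_(idx : {ffun 'I_p -> 'I_N})
           (tensor_supnorm B * expect (ising Ja) (Aof idx)))).
  apply: sum_le => idx; rewrite Rabs_mult.
  apply: Rmult_le_compat; [exact: Rabs_pos|exact: Rabs_pos|exact: supnorm_ge|exact: ginibre].
rewrite sum_scale.
have -> : \rsum_(idx : {ffun 'I_p -> 'I_N}) expect (ising Ja) (Aof idx) =
          \rsum_(s : config N) (ising Ja s * Mag s ^ p).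
  rewrite /expect exchange_big /=; apply: eq_bigr => s _.
  by rewrite sum_scale sum_Aof.
have H2 : \rsum_(s : config N) (ising Ja s * Mag s ^ p) <=
          \rsum_(s : config N) (ising Ja s * Rabs (Mag s) ^ p).
  apply: sum_le => s; apply: Rmult_le_compat_l; first exact: ising_ge0.
  rewrite RPow_abs; exact: Rle_abs.
have H3 := HM N J Hc.
have := Rmult_le_compat_l _ _ _ Hn (Rle_trans _ _ _ H2 H3).
lra.
Qed.
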